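(* Let $d$ and $k$ be integers with $1\le k\le d-1$. There is a constant $C=C(d,k)$ such that for every $d$-dimensional lattice $\Lambda\subseteq\mathbb{R}^d$ with $\lambda_d(\Lambda,B^d)\le1$, writing $\lambda_i=\lambda_i(\Lambda,B^d)$, the set $\Lambda\cap B^d$ can be covered by at most $C(\lambda_k\cdots\lambda_d)^{-1}$ $k$-dimensional linear subspaces of $\mathbb{R}^d$.
   Context: $B^d$ is the closed unit Euclidean ball in $\mathbb{R}^d$ centered at the origin. A $d$-dimensional lattice is the set of all integer linear combinations of $d$ linearly independent vectors of $\mathbb{R}^d$. For a lattice $\Lambda$ and a compact convex body $K$ symmetric about the origin, the $i$th successive minimum is $\lambda_i(\Lambda,K)=\inf\{\lambda\in\mathbb{R}:\dim(\Lambda\cap(\lambda K))\ge i\}$. *)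

(* Defs.v *)
From HB Require Import structures.
From mathcomp Require Import all_boot all_order all_algebra.
From mathcomp Require Import classical_sets reals.
Set Implicit Arguments. Unset Strict Implicit. Unset Printing Implicit Defensive.
Import Order.TTheory GRing.Theory Num.Theory.
Local Open Scope ring_scope.
Local Open Scope classical_set_scope.

Definition enorm (R : realType) (d : nat) (v : 'rV[R]_d) : R :=
  Num.sqrt (\sum_(j < d) v 0 j ^+ 2).

(* The lattice generated by the rows of an invertible matrix B:
   all integer combinations z *m B with z an integer row vector. *)
Definition lattice_basis (R : realType) (d : nat) (B : 'M[R]_d) : Prop :=
  B \in unitmx.

Definition in_lattice (R : realType) (d : nat) (B : 'M[R]_d) (v : 'rV[R]_d) : Prop :=
  exists z : 'rV[int]_d, v = map_mx (fun x : int => x%:~R) z *m B.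

(* dim (Lambda ∩ lam B^d) >= i  :<=>  there are i linearly independent
   lattice vectors of Euclidean norm <= lam. *)
Definition dim_ge (R : realType) (d : nat) (B : 'M[R]_d) (lam : R) (i : nat) : Prop :=
  exists M : 'M[R]_(i, d), row_free M /\
    forall j : 'I_i, in_lattice B (row j M) /\ enorm (row j M) <= lam.

Definition succ_min (R : realType) (d : nat) (B : 'M[R]_d) (i : nat) : R :=
  inf [set lam : R | 0 <= lam /\ dim_ge B lam i].

(* A finite family S of k-dimensional linear subspaces (given as row spaces
   of square matrices of rank k) covers Lambda ∩ B^d. *)
Definition covers_ball (R : realType) (d k : nat) (B : 'M[R]_d) (S : seq 'M[R]_d) : Prop :=
  (forall U, U \in S -> \rank U = k) /\
  forall v : 'rV[R]_d, in_lattice B v -> enorm v <= 1 ->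
    exists2 U, U \in S & (v <= U)%MS.

(* Main.v *)
Require Import Defs.
From HB Require Import structures.
From mathcomp Require Import all_boot all_order all_algebra.
From mathcomp Require Import boolp classical_sets reals.
From mathcomp Require Import zify ring lra.
Import Order.TTheory GRing.Theory Num.Theory.
Local Open Scope ring_scope.
Set Implicit Arguments. Unset Strict Implicit.

Section Norm.
Variables (R : realType) (d : nat).
Implicit Types (v w : 'rV[R]_d).

Definition sq v := \sum_(j < d) v 0 j ^+ 2.

Lemma sq_ge0 v : 0 <= sq v.
Proof. by apply: sumr_ge0 => j _; rewrite sqr_ge0. Qed.

Lemma enorm_ge0 v : 0 <= enorm v.
Proof. exact: sqrtr_ge0. Qed.

Lemma enorm_sq v : enorm v ^+ 2 = sq v.
Proof. by rewrite /enorm sqr_sqrtr // sq_ge0. Qed.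

Lemma sqE v : sq v = (v *m v^T) 0 0.
Proof. by rewrite !mxE; apply: eq_bigr => j _; rewrite !mxE expr2. Qed.

Lemma enorm_le v r : 0 <= r -> (enorm v <= r) = (sq v <= r ^+ 2).
Proof.
move=> r0; rewrite -enorm_sq; apply/esym; apply: ler_sqr;
by rewrite ?inE ?enorm_ge0 //=; exact: enorm_ge0.
Qed.

Lemma enorm_lt v r : 0 <= r -> (enorm v < r) = (sq v < r ^+ 2).
Proof.
move=> r0; rewrite -enorm_sq; apply/esym; apply: ltr_pXn2r => //;
by rewrite ?inE ?enorm_ge0 //=; exact: enorm_ge0.
Qed.

Lemma coord_le v i : `|v 0 i| <= enorm v.
Proof.
rewrite -sqrtr_sqr /enorm; apply: ler_wsqrtr; rewrite (bigD1 i) //= lerDl.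
by apply: sumr_ge0 => j _; rewrite sqr_ge0.
Qed.

Lemma sq_eq0 v : sq v = 0 -> v = 0.
Proof.
move=> /eqP; rewrite psumr_eq0; last by move=> j _; rewrite sqr_ge0.
move=> /allP H; apply/rowP => j; rewrite mxE.
by have := H j (mem_index_enum j); rewrite sqrf_eq0 => /eqP.
Qed.

Lemma enorm_gt0 v : v != 0 -> 0 < enorm v.
Proof.
move=> vn0; rewrite lt_neqAle enorm_ge0 andbT eq_sym.
apply/negP => /eqP h; move: (enorm_sq v); rewrite h expr0n /= => /esym/sq_eq0.
by move/eqP: vn0.
Qed.

Lemma enorm0 : enorm (0 : 'rV[R]_d) = 0.
Proof.
by rewrite /enorm big1 ?sqrtr0 // => j _; rewrite mxE expr0n.
Qed.

End Norm.

Section Lattice.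
Variables (R : realType) (d : nat) (B : 'M[R]_d).
Hypothesis Bu : B \in unitmx.
Local Notation lat := (in_lattice B).

Definition intmx (z : 'rV[int]_d) : 'rV[R]_d := map_mx (fun x : int => x%:~R) z.

Lemma lat0 : lat 0.
Proof.
exists 0; have -> : map_mx (fun x : int => (x%:~R : R)) (0 : 'rV[int]_d) = 0.
  by apply/rowP => j; rewrite !mxE.
by rewrite mul0mx.
Qed.

Lemma latD v w : lat v -> lat w -> lat (v + w).
Proof.
move=> [z ->] [z' ->]; exists (z + z'); rewrite -mulmxDl; congr (_ *m _).
by apply/rowP => j; rewrite !mxE intrD.
Qed.

Lemma latN v : lat v -> lat (- v).
Proof.
move=> [z ->]; exists (- z); rewrite -mulNmx; congr (_ *m _).
by apply/rowP => j; rewrite !mxE intrN.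
Qed.

Lemma latB v w : lat v -> lat w -> lat (v - w).
Proof. by move=> hv hw; apply: latD => //; apply: latN. Qed.

Lemma latZ (n : int) v : lat v -> lat (n%:~R *: v).
Proof.
move=> [z ->]; exists (n *: z); rewrite scalemxAl; congr (_ *m _).
by apply/rowP => j; rewrite !mxE intrM.
Qed.

Lemma lat_row i : lat (row i B).
Proof.
exists (delta_mx 0 i); rewrite rowE; congr (_ *m _).
by apply/rowP => j; rewrite !mxE; case: (_ && _).
Qed.

Lemma lat_discrete : exists2 delta : R, 0 < delta &
  forall v, lat v -> v != 0 -> delta <= enorm v.
Proof.
pose Bi := invmx B.
pose K : R := \sum_(l < d) \sum_(i < d) `|Bi l i| + 1.
have K0 : 0 < K by rewrite ltr_wpDl // sumr_ge0 // => l _; rewrite sumr_ge0.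
exists K^-1; first by rewrite invr_gt0.
move=> v [z vE] vn0.
have zE : intmx z = v *m Bi by rewrite vE mulmxK.
have [i zi] : exists i, z 0 i != 0.
  apply/existsP; apply: contraR vn0 => /existsPn H.
  rewrite vE; apply/eqP; apply/rowP => j; rewrite !mxE big1 // => l _.
  by rewrite mxE (eqP (negPn (H l))) mul0r.
have h1 : 1 <= `|(intmx z) 0 i|.
  rewrite mxE -intr_norm ler1z.
  by rewrite -normr_gt0 in zi.
have h2 : `|(intmx z) 0 i| <= enorm v * K.
  rewrite zE mxE (le_trans (ler_norm_sum _ _ _)) //.
  rewrite mulrDr mulr1 ler_wpDr ?enorm_ge0 // mulr_sumr.
  apply: ler_sum => l _; rewrite normrM.
  apply: (@le_trans _ _ (enorm v * `|Bi l i|)).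
    by rewrite ler_wpM2r ?coord_le.
  rewrite ler_wpM2l ?enorm_ge0 //.
  by rewrite (bigD1 i) //= lerDl sumr_ge0.
by rewrite -[K^-1]mul1r ler_pdivrMr //; exact: le_trans h1 h2.
Qed.

End Lattice.

Section Greedy.
Variables (R : realType) (d : nat) (B : 'M[R]_d).
Hypothesis Bu : B \in unitmx.
Local Notation lat := (in_lattice B).
Implicit Types (L : 'M[R]_d) (v z : 'rV[R]_d).

Lemma exists_out L : (\rank L < d)%N -> exists z, lat z /\ ~~ (z <= L)%MS.
Proof.
move=> rL; apply: contrapT => H.
have BL : (B <= L)%MS.
  apply/row_subP => i; apply: contrapT => /negP nr; apply: H.
  by exists (row i B); split => //; apply: lat_row.
by move: (mxrankS BL); rewrite mxrank_unit // leqNgt rL.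
Qed.

Definition mset L : set R := fun r => exists z, lat z /\ ~~ (z <= L)%MS /\ r = enorm z.
Definition mval L := inf (mset L).

Lemma mset_lb L : has_lbound (mset L).
Proof. by exists 0 => r [z [_ [_ ->]]]; apply: enorm_ge0. Qed.

Lemma mset_ne L : (\rank L < d)%N -> nonempty (mset L).
Proof. by move=> /exists_out [z [hz nz]]; exists (enorm z); exists z. Qed.

Lemma mval_lb L z : lat z -> ~~ (z <= L)%MS -> mval L <= enorm z.
Proof. by move=> hz nz; apply: (ge_inf (mset_lb L)); exists z. Qed.

Lemma mval_pos L : (\rank L < d)%N -> 0 < mval L.
Proof.
move=> rL; have [delta d0 Hd] := lat_discrete Bu.
apply: (lt_le_trans d0); apply: lb_le_inf; first exact: mset_ne.
move=> r [z [hz [nz ->]]]; apply: Hd => //.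
by apply: contraNneq nz => ->; rewrite sub0mx.
Qed.

Lemma mval_near L : (\rank L < d)%N ->
  exists z, lat z /\ ~~ (z <= L)%MS /\ enorm z < 2 * mval L.
Proof.
move=> rL; have m0 := mval_pos rL.
have lt2 : mval L < 2 * mval L by rewrite ltr_pMl // ltr1n.
have [r [z [hz [nz ->]]] lt] := inf_lt (mset_ne rL) lt2.
by exists z.
Qed.

Lemma mval_mono L1 L2 : (L1 <= L2)%MS -> (\rank L2 < d)%N -> mval L1 <= mval L2.
Proof.
move=> s r2; apply: lb_le_inf; first exact: mset_ne.
move=> r [z [hz [nz ->]]]; apply: mval_lb => //.
by apply: contra nz => h; apply: submx_trans h s.
Qed.

Definition nextv L : 'rV[R]_d :=
  match pselect (exists z, lat z /\ ~~ (z <= L)%MS /\ enorm z < 2 * mval L) with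
  | left h => proj1_sig (cid h)
  | right _ => 0
  end.

Lemma nextv_spec L : (\rank L < d)%N ->
  lat (nextv L) /\ ~~ (nextv L <= L)%MS /\ enorm (nextv L) < 2 * mval L.
Proof.
move=> rL; rewrite /nextv; case: pselect => [h|h]; last first.
  by exfalso; apply: h; apply: mval_near.
by case: (cid h).
Qed.

Fixpoint Ls (n : nat) : 'M[R]_d :=
  match n with 0 => 0 | n.+1 => (Ls n + nextv (Ls n))%MS end.

Definition vv n := nextv (Ls n).
Definition mm n := mval (Ls n).

Lemma rank_add1 L v : ~~ (v <= L)%MS -> \rank (L + v)%MS = (\rank L).+1.
Proof.
move=> nv; apply/eqP; rewrite eqn_leq; apply/andP; split.
  apply: (leq_trans (mxrank_adds_leqif L v)).
  by rewrite -[X in (_ <= X)%N]addn1 leq_add2l; exact: rank_leq_row.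
have := mxrank_leqif_sup (addsmxSl L v).
move=> [le eq]; rewrite ltn_neqAle le andbT eq.
by apply: contra nv => h; apply: submx_trans h; apply: addsmxSr.
Qed.

Lemma Ls_rank n : (n <= d)%N -> \rank (Ls n) = n.
Proof.
elim: n => [|n IH] hn /=; first by rewrite mxrank0.
have hn' : (n <= d)%N by apply: ltnW.
have rL : (\rank (Ls n) < d)%N by rewrite IH.
have [_ [nv _]] := nextv_spec rL.
by rewrite rank_add1 // IH.
Qed.

Lemma Ls_mono i j : (i <= j)%N -> (Ls i <= Ls j)%MS.
Proof.
elim: j => [|j IH]; first by rewrite leqn0 => /eqP ->.
rewrite leq_eqVlt => /orP [/eqP ->|]; first exact: submx_refl.
rewrite ltnS => /IH h; apply: submx_trans h _; exact: addsmxSl.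
Qed.

Lemma vv_sub i j : (i < j)%N -> (vv i <= Ls j)%MS.
Proof.
move=> ij; apply: submx_trans (Ls_mono ij); exact: addsmxSr.
Qed.

Lemma vv_spec i : (i < d)%N ->
  lat (vv i) /\ ~~ (vv i <= Ls i)%MS /\ enorm (vv i) < 2 * mm i.
Proof. by move=> id; apply: nextv_spec; rewrite Ls_rank // ltnW. Qed.

Lemma Ls_full (x : 'rV[R]_d) : (x <= Ls d)%MS.
Proof. by apply: submx_full; rewrite /row_full Ls_rank. Qed.

Lemma mm_pos i : (i < d)%N -> 0 < mm i.
Proof. by move=> id; apply: mval_pos; rewrite Ls_rank // ltnW. Qed.

Lemma mm_mono i j : (i <= j)%N -> (j < d)%N -> mm i <= mm j.
Proof.
by move=> ij jd; apply: mval_mono; [apply: Ls_mono | rewrite Ls_rank // ltnW].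
Qed.

Definition Mv n : 'M[R]_(n, d) := \matrix_(l < n) vv l.

Lemma Ls_sub_Mv n : (Ls n <= Mv n)%MS.
Proof.
elim: n => [|n IH] /=; first exact: sub0mx.
rewrite addsmx_sub; apply/andP; split.
  apply: submx_trans IH _; apply/row_subP => l.
  have -> : row l (Mv n) = row (widen_ord (leqnSn n) l) (Mv n.+1).
    by apply/rowP => j; rewrite !mxE.
  exact: row_sub.
have -> : nextv (Ls n) = row ord_max (Mv n.+1) by apply/rowP => j; rewrite !mxE.
exact: row_sub.
Qed.

Lemma Mv_free n : (n <= d)%N -> row_free (Mv n).
Proof.
move=> nd; rewrite /row_free eqn_leq rank_leq_row /=.
by rewrite -{1}(Ls_rank nd) mxrankS // Ls_sub_Mv.
Qed.

Lemma succ_min_le i : (i < d)%N -> succ_min B i.+1 <= 2 * mm i.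
Proof.
move=> id; have hlb : has_lbound [set lam : R | 0 <= lam /\ dim_ge B lam i.+1].
  by exists 0 => r [].
apply: (ge_inf hlb); split.
  by rewrite mulr_ge0 // ltW // mm_pos.
exists (Mv i.+1); split; first exact: Mv_free.
move=> l; rewrite (_ : row l (Mv i.+1) = vv l); last by apply/rowP => j; rewrite !mxE.
have ld : (l < d)%N by apply: leq_trans (ltn_ord l) _.
have [hl [_ nl]] := vv_spec ld; split => //.
apply: ltW; apply: (lt_le_trans nl); rewrite ler_pM2l //.
by apply: mm_mono => //; rewrite -ltnS.
Qed.

Lemma succ_min_ge i : (i < d)%N -> mm i <= succ_min B i.+1.
Proof.
move=> id; apply: lb_le_inf.
  exists (2 * mm i); split; first by rewrite mulr_ge0 // ltW // mm_pos.
  exists (Mv i.+1); split; first exact: Mv_free.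
  move=> l; rewrite (_ : row l (Mv i.+1) = vv l); last by apply/rowP => j; rewrite !mxE.
  have ld : (l < d)%N by apply: leq_trans (ltn_ord l) _.
  have [hl [_ nl]] := vv_spec ld; split => //.
  apply: ltW; apply: (lt_le_trans nl); rewrite ler_pM2l //.
  by apply: mm_mono => //; rewrite -ltnS.
move=> lam [_ [M [fM HM]]].
have [j nj] : exists j, ~~ (row j M <= Ls i)%MS.
  apply: contrapT => H.
  have ML : (M <= Ls i)%MS.
    by apply/row_subP => j; apply: contrapT => /negP h; apply: H; exists j.
  move: (mxrankS ML); rewrite (eqP fM) Ls_rank ?ltnn //; exact: ltnW.
have [hj nj'] := HM j.
by apply: le_trans nj'; apply: mval_lb.
Qed.

End Greedy.

Section Ortho.
Variables (R : realType) (d : nat) (B : 'M[R]_d).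
Hypothesis Bu : B \in unitmx.
Local Notation lat := (in_lattice B).
Local Notation Ls := (Ls B).

Lemma orth_sub m (y : 'M[R]_(m, d)) (L : 'M[R]_d) (u : 'rV[R]_d) :
  (y <= L)%MS -> L *m u^T = 0 -> y *m u^T = 0.
Proof. by move=> /submxP [D ->] h; rewrite -mulmxA h mulmx0. Qed.

Lemma u_exists (i : 'I_d) : exists u : 'rV[R]_d,
  (u <= Ls i.+1)%MS /\ Ls i *m u^T = 0 /\ (u *m u^T) 0 0 = 1.
Proof.
pose K := kermx (Ls i)^T.
have rK : \rank K = (d - i)%N.
  by rewrite mxrank_ker mxrank_tr Ls_rank // ltnW.
have rL : \rank (Ls i.+1) = i.+1 by rewrite Ls_rank.
have := mxrank_sum_cap K (Ls i.+1); rewrite rK rL.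
have : (\rank (K + Ls i.+1)%MS <= d)%N by apply: rank_leq_row.
move=> h1 h2.
have cap0 : (K :&: Ls i.+1)%MS != 0.
  rewrite -mxrank_eq0; apply/eqP => h3; move: h2; rewrite h3 addn0 => h2.
  move: h1; rewrite h2; have := ltn_ord i; lia.
pose w := nz_row (K :&: Ls i.+1)%MS.
have wn0 : w != 0 by rewrite nz_row_eq0.
have wK : (w <= K)%MS by apply: submx_trans (nz_row_sub _) (capmxSl _ _).
have wL : (w <= Ls i.+1)%MS by apply: submx_trans (nz_row_sub _) (capmxSr _ _).
have wo : Ls i *m w^T = 0.
  by move/sub_kermxP: wK => h; rewrite -[Ls i]trmxK -trmx_mul h trmx0.
have e0 := enorm_gt0 wn0.
exists ((enorm w)^-1 *: w); split; first exact: scalemx_sub.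
split; first by rewrite linearZ /= -scalemxAr wo scaler0.
rewrite linearZ /= -scalemxAr -scalemxAl.
rewrite [in X in X = 1]mxE [in X in _ * X = 1]mxE -sqE -enorm_sq.
by rewrite mulrA -expr2 exprVn mulVf // expf_neq0 // gt_eqF.
Qed.

Definition ub (i : 'I_d) : 'rV[R]_d := proj1_sig (cid (u_exists i)).

Lemma ub_spec (i : 'I_d) :
  (ub i <= Ls i.+1)%MS /\ Ls i *m (ub i)^T = 0 /\ (ub i *m (ub i)^T) 0 0 = 1.
Proof. by rewrite /ub; case: cid. Qed.

Definition Um : 'M[R]_d := \matrix_(i < d) ub i.

Lemma row_Um i : row i Um = ub i.
Proof. by apply/rowP => j; rewrite !mxE. Qed.

Lemma Um_entry i j : (Um *m Um^T) i j = (ub i *m (ub j)^T) 0 0.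
Proof. by rewrite !mxE; apply: eq_bigr => l _; rewrite !mxE. Qed.

Lemma ub_orth (i j : 'I_d) : (i < j)%N -> (ub i *m (ub j)^T) = 0.
Proof.
move=> ij; have [h1 _] := ub_spec i; have [_ [h2 _]] := ub_spec j.
by apply: orth_sub h2; apply: submx_trans h1 (Ls_mono _ _).
Qed.

Lemma Um_orth : Um *m Um^T = 1%:M.
Proof.
apply/matrixP => i j; rewrite Um_entry [RHS]mxE.
case: (ltngtP i j) => [ij|ji|/val_inj ->].
- have /negPf -> : i != j by rewrite -val_eqE /= ltn_eqF.
  by rewrite ub_orth // mxE.
- have -> : (ub i *m (ub j)^T) 0 0 = ((ub i *m (ub j)^T)^T) 0 0 by rewrite [in RHS]mxE.
  rewrite trmx_mul trmxK ub_orth //.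
  have /negPf -> : i != j by rewrite -val_eqE /= gtn_eqF.
  by rewrite mxE.
- by have [_ [_ ->]] := ub_spec j; rewrite eqxx.
Qed.

Lemma Um_orth' : Um^T *m Um = 1%:M.
Proof. exact: mulmx1C Um_orth. Qed.

Definition q (x : 'rV[R]_d) : 'rV[R]_d := x *m Um^T.

Lemma qE x (j : 'I_d) : q x 0 j = (x *m (ub j)^T) 0 0.
Proof. by rewrite !mxE; apply: eq_bigr => l _; rewrite !mxE. Qed.

Lemma q_inv x : q x *m Um = x.
Proof. by rewrite /q -mulmxA Um_orth' mulmx1. Qed.

Lemma sq_q x : sq (q x) = sq x.
Proof.
rewrite !sqE; congr (_ 0 0).
by rewrite /q trmx_mul trmxK mulmxA -[_ *m Um^T *m Um]mulmxA Um_orth' mulmx1.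
Qed.

Lemma qD x y : q (x + y) = q x + q y.
Proof. exact: mulmxDl. Qed.

Lemma qN x : q (- x) = - q x.
Proof. exact: mulNmx. Qed.

Lemma qZ a x : q (a *: x) = a *: q x.
Proof. by rewrite /q scalemxAl. Qed.

Lemma q_vanish (y : 'rV[R]_d) n (j : 'I_d) : (y <= Ls n)%MS -> (n <= j)%N ->
  q y 0 j = 0.
Proof.
move=> yL nj; rewrite qE; have [_ [h _]] := ub_spec j.
by rewrite (orth_sub (submx_trans yL (Ls_mono _ nj)) h) mxE.
Qed.

Lemma q_span (y : 'rV[R]_d) n :
  (forall j : 'I_d, (n <= j)%N -> q y 0 j = 0) -> (y <= Ls n)%MS.
Proof.
move=> H; rewrite -(q_inv y) mulmx_sum_row; apply: summx_sub => j _.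
case: (leqP n j) => [nj|jn]; first by rewrite H // scale0r sub0mx.
apply: scalemx_sub; rewrite row_Um; have [h _] := ub_spec j.
exact: submx_trans h (Ls_mono _ jn).
Qed.

Lemma q_coord_le x (j : 'I_d) : `|q x 0 j| <= enorm x.
Proof.
apply: le_trans (coord_le _ _) _.
by rewrite /enorm; have := sq_q x; rewrite /sq => ->.
Qed.

End Ortho.

Section Inj.
Variables (R : realType) (d : nat) (B : 'M[R]_d).
Hypothesis Bu : B \in unitmx.
Local Notation lat := (in_lattice B).
Local Notation Ls := (Ls B).
Local Notation vv := (vv B).
Local Notation mm := (mm B).
Local Notation q := (q Bu).

Lemma sq_bound (c : R) (y : 'rV[R]_d) : (forall j, (y 0 j) ^+ 2 <= c) ->
  sq y <= c *+ d.
Proof.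
move=> H; rewrite /sq -[d in X in _ <= X]card_ord -sumr_const.
by apply: ler_sum => j _; apply: H.
Qed.

Lemma qB_entry (a b : 'rV[R]_d) i : q (a - b) 0 i = q a 0 i - q b 0 i.
Proof. by rewrite qD qN !mxE. Qed.

Lemma qBZ_entry (a v : 'rV[R]_d) c i : q (a - c *: v) 0 i = q a 0 i - c * q v 0 i.
Proof. by rewrite qB_entry qZ !mxE. Qed.

Lemma lat_inj (a b : 'rV[R]_d) : lat a -> lat b ->
  (forall j : 'I_d, `|q a 0 j - q b 0 j| < mm j / d.+1%:R) -> a = b.
Proof.
move=> la lb H; apply/eqP; rewrite -subr_eq0; apply/negP => /negP zn0.
set z := a - b in zn0.
have lz : lat z by apply: latB.
have exP : exists n, (z <= Ls n)%MS by exists d; apply: Ls_full.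
case: (ex_minnP exP) => n zn nmin.
have nd : (n <= d)%N by apply: nmin; apply: Ls_full.
case: n zn nmin nd => [|j] zn nmin jd.
  by move: zn; rewrite /= submx0 (negPf zn0).
have nj : ~~ (z <= Ls j)%MS.
  by apply/negP => h; have := nmin _ h; rewrite ltnn.
have m0 := mm_pos Bu jd.
have h1 := mval_lb lz nj.
have hq : forall i : 'I_d, (q z 0 i) ^+ 2 <= (mm j / d.+1%:R) ^+ 2.
  move=> i; case: (leqP j.+1 i) => [ni|in_].
    by rewrite (q_vanish Bu zn ni) expr0n /= sqr_ge0.
  have hc : `|q z 0 i| <= mm j / d.+1%:R.
    rewrite /z qB_entry; apply: ltW; apply: (lt_le_trans (H i)).
    by rewrite ler_pM2r ?invr_gt0 //; apply: mm_mono => //.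
  rewrite -(real_normK (num_real (q z 0 i))) !expr2.
  by apply: ler_pM => //; apply: normr_ge0.
have h2 := sq_bound hq.
have h3 : (mm j / d.+1%:R) ^+ 2 *+ d < mm j ^+ 2.
  rewrite -mulr_natr expr_div_n -[X in _ < X]mulr1 -mulrA ltr_pM2l ?exprn_gt0 //.
  rewrite mulrC ltr_pdivrMr ?exprn_gt0 ?ltr0n // mul1r -natrX ltr_nat.
  by rewrite expnS mulSn ltn_addr // muln_gt0.
have := le_lt_trans h2 h3; rewrite (sq_q Bu) -enorm_sq.
have h4 : mm j ^+ 2 <= enorm z ^+ 2.
  by rewrite !expr2; apply: ler_pM => //; apply: ltW.
by rewrite ltNge h4.
Qed.

Lemma h_nz (j : 'I_d) : q (vv j) 0 j != 0.
Proof.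
have [_ [nv _]] := vv_spec Bu (ltn_ord j).
apply: contra nv => /eqP h0; apply: q_span => i ji.
case: (ltnP j i) => [lt|le]; last by have -> : i = j by apply/val_inj/eqP; rewrite eqn_leq ji le.
by apply: q_vanish lt; apply: (vv_sub B).
Qed.

Lemma reduce_aux (x : 'rV[R]_d) (K1 : nat) : (K1 <= d)%N -> forall p, (p <= K1)%N ->
  exists w, lat w /\ (w <= Ls K1)%MS /\ forall j : 'I_d, (K1 - p <= j)%N -> (j < K1)%N ->
    0 <= q (x - w) 0 j < `|q (vv j) 0 j|.
Proof.
move=> K1d; elim => [|p IH] hp.
  exists 0; split; first exact: lat0.
  by split; [exact: sub0mx | move=> j; rewrite subn0 => h1 h2; move: (leq_ltn_trans h1 h2); rewrite ltnn].
have [w [lw [wL Hw]]] := IH (ltnW hp).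
have j0d : (K1 - p.+1 < d)%N by move: hp K1d; lia.
pose j0 : 'I_d := Ordinal j0d.
pose h := q (vv j0) 0 j0.
have hn0 : h != 0 := h_nz j0.
have ha : 0 < `|h| by rewrite normr_gt0.
pose s : int := if 0 <= h then 1 else -1.
have sh : s%:~R * h = `|h|.
  rewrite /s; case: ifP => h0; first by rewrite mul1r ger0_norm.
  by rewrite ltr0_norm ?ltNge ?h0 // mulN1r.
pose t := q (x - w) 0 j0.
pose n := Num.floor (t / `|h|).
exists (w + (n * s)%:~R *: vv j0); split.
  by apply: latD => //; apply: latZ; have [] := vv_spec Bu (ltn_ord j0).
split.
  apply: addmx_sub => //; apply: scalemx_sub; apply: (vv_sub B).
  by rewrite /= ; move: hp; lia.
move=> j hj1 hj2.
have qe : q (x - (w + (n * s)%:~R *: vv j0)) 0 j = q (x - w) 0 j - (n * s)%:~R * q (vv j0) 0 j.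
  by rewrite opprD addrA qBZ_entry.
rewrite qe.
case: (ltnP j0 j) => [lt|le].
  rewrite (q_vanish Bu (vv_sub B (leqnn _)) lt) mulr0 subr0.
  by apply: Hw => //; move: lt; rewrite /=; lia.
have -> : j = j0 by apply/val_inj/eqP; rewrite eqn_leq le hj1.
rewrite -/h intrM -mulrA sh -/t.
have fl := Num.Theory.floor_itv (t / `|h|).
move: fl; rewrite -/n => /andP [f1 f2].
apply/andP; split.
  by rewrite subr_ge0 -ler_pdivlMr.
rewrite ltrBlDl (_ : n%:~R * `|h| + `|h| = (n + 1)%:~R * `|h|); last first.
  by rewrite intrD mulrDl mul1r.
by rewrite -ltr_pdivrMr.
Qed.

Lemma reduce (x : 'rV[R]_d) (K1 : nat) : (K1 <= d)%N ->
  exists w, lat w /\ (w <= Ls K1)%MS /\ forall j : 'I_d, (j < K1)%N ->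
    0 <= q (x - w) 0 j < 2 * mm j.
Proof.
move=> K1d; have [w [lw [wL Hw]]] := reduce_aux x K1d (leqnn K1).
exists w; split => //; split => // j jK.
have hK : (K1 - K1 <= j)%N by rewrite subnn.
have /andP [h1 h2] := Hw j hK jK.
rewrite h1 /=.
apply: (lt_le_trans h2); apply: ltW; apply: le_lt_trans (q_coord_le _ _ _) _.
by have [_ [_ ->]] := vv_spec Bu (ltn_ord j).
Qed.

End Inj.

Section Main.
Variables (R : realType) (d k : nat) (B : 'M[R]_d).
Hypothesis Bu : B \in unitmx.
Hypothesis k1 : (1 <= k)%N.
Hypothesis kd : (k <= d - 1)%N.
Hypothesis hmin : succ_min B d <= 1.
Local Notation lat := (in_lattice B).
Local Notation Ls := (Ls B).
Local Notation vv := (vv B).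
Local Notation mm := (mm B).
Local Notation q := (q Bu).

Definition K1 := k.-1.
Lemma K1d : (K1 <= d)%N. Proof. rewrite /K1; lia. Qed.
Lemma K1k : k = K1.+1. Proof. rewrite /K1; lia. Qed.
Lemma d0 : (0 < d)%N. Proof. lia. Qed.

Lemma mm_le1 (j : 'I_d) : mm j <= 1.
Proof.
have dd : (d.-1 < d)%N by rewrite prednK ?d0.
apply: le_trans (mm_mono Bu _ dd) _; first by rewrite -ltnS prednK ?d0.
apply: le_trans (succ_min_ge Bu dd) _; by rewrite prednK ?d0.
Qed.

Definition wred (x : 'rV[R]_d) : 'rV[R]_d := proj1_sig (cid (reduce Bu x K1d)).
Definition rx x := x - wred x.

Lemma wred_spec x : lat (wred x) /\ (wred x <= Ls K1)%MS /\
  forall j : 'I_d, (j < K1)%N -> 0 <= q (rx x) 0 j < 2 * mm j.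
Proof. by rewrite /rx /wred; case: cid. Qed.

Definition Dd : R := d.+1%:R.
Lemma Dd0 : 0 < Dd. Proof. by rewrite ltr0n. Qed.

Definition ubd (j : 'I_d) : R := if (j < K1)%N then 2 * Dd else 2 * Dd / mm j.
Definition shf (j : 'I_d) : R := if (j < K1)%N then 0 else Dd / mm j.
Definition yv x (j : 'I_d) : R := Dd * q (rx x) 0 j / mm j + shf j.
Definition Nn (j : 'I_d) : nat := Num.trunc (ubd j).

Definition idxT := {dffun forall j : 'I_d, 'I_(Nn j).+1}.
Definition idx x : idxT := [ffun j => inord (Num.trunc (yv x j))].

Lemma yv_range x (j : 'I_d) : enorm x <= 1 -> 0 <= yv x j <= ubd j.
Proof.
move=> x1; have mj := mm_pos Bu (ltn_ord j).
have [_ [wL Hw]] := wred_spec x.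
rewrite /yv /shf /ubd; case: ifP => jK.
  have /andP [h1 h2] := Hw j jK.
  rewrite addr0 divr_ge0 ?mulr_ge0 ?(ltW Dd0) ?(ltW mj) //=.
  rewrite ler_pdivrMr // [2 * Dd]mulrC -mulrA ler_pM2l ?Dd0 //; exact: ltW.
have qe : q (rx x) 0 j = q x 0 j.
  rewrite /rx qB_entry (q_vanish Bu wL) ?subr0 //; by rewrite leqNgt jK.
rewrite qe; have := q_coord_le Bu x j => hq.
have hq1 : `|q x 0 j| <= 1 := le_trans hq x1.
move: hq1; rewrite ler_norml => /andP [l1 l2].
rewrite -mulrDl; apply/andP; split.
  rewrite divr_ge0 ?(ltW mj) // -[X in _ + X]mulr1 -mulrDr mulr_ge0 ?(ltW Dd0) //.
  by rewrite -lerBlDr sub0r.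
rewrite ler_pM2r ?invr_gt0 // -[X in _ + X]mulr1 -mulrDr mulrC ler_pM2r ?Dd0 //.
by rewrite -[2]/(1 + 1 : R) lerD2r.
Qed.

Lemma idx_inj x x' : lat x -> lat x' -> enorm x <= 1 -> enorm x' <= 1 ->
  idx x = idx x' -> rx x = rx x'.
Proof.
move=> lx lx' x1 x1' e.
have [lw _] := wred_spec x; have [lw' _] := wred_spec x'.
have lr : lat (rx x) by apply: latB.
have lr' : lat (rx x') by apply: latB.
apply: (@lat_inj _ _ _ Bu _ _ lr lr') => j.
have /andP [y0 y1] := yv_range j x1; have /andP [y0' y1'] := yv_range j x1'.
have : Num.trunc (yv x j) = Num.trunc (yv x' j).
  have := congr1 (fun f : idxT => nat_of_ord (f j)) e; rewrite /= !ffunE.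
  rewrite !inordK // ltnS; exact: le_truncn.
move=> te.
have /andP [a1 a2] := truncn_itv y0; have /andP [b1 b2] := truncn_itv y0'.
rewrite te in a1 a2.
have hd : `|yv x j - yv x' j| < 1.
  rewrite ltr_norml; apply/andP; split.
    move: b2 a1; rewrite -natr1; lra.
  move: a2 b1; rewrite -natr1; lra.
have mj := mm_pos Bu (ltn_ord j).
have E : yv x j - yv x' j = (Dd / mm j) * (q (rx x) 0 j - q (rx x') 0 j).
  by rewrite /yv; ring.
rewrite E normrM ger0_norm ?divr_ge0 ?(ltW Dd0) ?(ltW mj) // in hd.
have Dm : 0 < Dd / mm j by rewrite divr_gt0 ?Dd0.
rewrite -(ltr_pM2l Dm) (_ : Dd / mm j * (mm j / d.+1%:R) = 1) //.
by rewrite /Dd mulrA divfK ?gt_eqF // divff // pnatr_eq0.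
Qed.

Definition Ufor (y : 'rV[R]_d) : 'M[R]_d :=
  if (y <= Ls K1)%MS then Ls k else (Ls K1 + y)%MS.

Definition Uof (t : idxT) : 'M[R]_d :=
  match pselect (exists x, lat x /\ enorm x <= 1 /\ idx x = t) with
  | left h => Ufor (rx (proj1_sig (cid h)))
  | right _ => Ls k
  end.

Definition Sfam : seq 'M[R]_d := [seq Uof t | t <- enum idxT].

Lemma kd' : (k <= d)%N. Proof. lia. Qed.

Lemma Ufor_rank y : \rank (Ufor y) = k.
Proof.
rewrite /Ufor; case: ifP => h; first by rewrite Ls_rank // kd'.
by rewrite rank_add1 ?h // Ls_rank ?K1d // -K1k.
Qed.

Lemma Uof_rank t : \rank (Uof t) = k.
Proof.
rewrite /Uof; case: pselect => [h|_]; first exact: Ufor_rank.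
by rewrite Ls_rank // kd'.
Qed.

Lemma Sfam_covers : covers_ball k B Sfam.
Proof.
split.
  by move=> U /mapP [t _ ->]; apply: Uof_rank.
move=> v lv v1; exists (Uof (idx v)); first by apply: map_f; rewrite mem_enum.
rewrite /Uof; case: pselect => [h|h]; last first.
  by exfalso; apply: h; exists v.
case: (cid h) => x0 [lx0 [x01 ex0]] /=.
have e := idx_inj lx0 lv x01 v1 ex0.
have [_ [wL _]] := wred_spec v.
have vE : v = rx v + wred v by rewrite /rx subrK.
rewrite e /Ufor; case: ifP => hr.
  have sK : (Ls K1 <= Ls k)%MS by apply: Ls_mono; rewrite K1k.
  by rewrite {1}vE; apply: addmx_sub; apply: submx_trans sK.
by rewrite {1}vE; apply: addmx_sub; [apply: addsmxSr | apply: submx_trans wL (addsmxSl _ _)].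
Qed.

Definition ell (j : nat) : R := if (j < K1)%N then 1 else succ_min B j.+1.

Lemma ell_gt0 (j : 'I_d) : 0 < ell j.
Proof.
rewrite /ell; case: ifP => // _.
exact: lt_le_trans (mm_pos Bu (ltn_ord j)) (succ_min_ge Bu (ltn_ord j)).
Qed.

Definition Aconst : R := 2 * (2 * Dd + 1).

Lemma Nn_bound (j : 'I_d) : (Nn j).+1%:R <= Aconst / ell j.
Proof.
have mj := mm_pos Bu (ltn_ord j).
have ub0 : 0 <= ubd j.
  rewrite /ubd; case: ifP => _; rewrite ?divr_ge0 ?mulr_ge0 ?(ltW Dd0) ?(ltW mj) //.
have h1 : (Nn j).+1%:R <= ubd j + 1 by rewrite -natr1 lerD2r /Nn truncn_le.
apply: le_trans h1 _; rewrite /ubd /ell /Aconst; case: ifP => _.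
  rewrite divr1; have := Dd0; lra.
have m1 := mm_le1 j.
have l2 := succ_min_le Bu (ltn_ord j).
have l0 : 0 < succ_min B j.+1 by apply: lt_le_trans (succ_min_ge Bu (ltn_ord j)).
apply: (@le_trans _ _ ((2 * Dd + 1) / mm j)).
  rewrite [X in _ <= X]mulrDl mul1r lerD2l invf_ge1 //.
rewrite [2 * (2 * Dd + 1)]mulrC -mulrA ler_pM2l; last by have := Dd0; lra.
rewrite -invf_div lef_pV2 ?inE ?divr_gt0 //.
  by rewrite ler_pdivrMr // mulrC.
by rewrite posrE divr_gt0.
Qed.

Lemma prod_ell : \prod_(j < d) ell j = \prod_(k <= i < d.+1) succ_min B i.
Proof.
rewrite -(big_mkord xpredT ell) (@big_cat_nat _ _ _ K1 0 d _ _ (leq0n K1) K1d) /=.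
rewrite (eq_big_nat _ _ (F2 := fun _ => 1)); last first.
  by move=> i /andP [_ h]; rewrite /ell h.
rewrite big1_eq mul1r K1k big_add1 /=; apply: eq_big_nat => i /andP [h _].
by rewrite /ell ltnNge h.
Qed.

Lemma Sfam_size :
  (size Sfam)%:R <= Aconst ^+ d / \prod_(k <= i < d.+1) succ_min B i.
Proof.
rewrite size_map -cardE card_dep_ffun foldrE big_map big_enum /=.
under eq_bigr do rewrite card_ord.
rewrite natr_prod -prod_ell -prodfV -[d in Aconst ^+ d]card_ord -prodr_const -big_split /=.
apply: ler_prod => j _; rewrite ler0n /=; exact: Nn_bound.
Qed.

End Main.

Theorem corollary3 (R : realType) (d k : nat) :
  (1 <= k)%N -> (k <= d - 1)%N ->
  exists C : R, forall B : 'M[R]_d,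
    lattice_basis B -> succ_min B d <= 1 ->
    exists S : seq 'M[R]_d, covers_ball k B S /\
      (size S)%:R <= C / \prod_(k <= i < d.+1) succ_min B i.
Proof.
move=> k1 kd; exists ((2 * (2 * d.+1%:R + 1)) ^+ d) => B Bu hmin.
exists (@Sfam R d k B Bu k1 kd hmin); split.
  exact: Sfam_covers.
exact: (@Sfam_size R d k B Bu k1 kd hmin).
Qed.
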